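(* Let $q\ge 2$ and $n\ge 2$ be integers and let $m=n-1$. Under uniform transmission over the $1$-deletion channel with input length $n$, $$\min_{{\boldsymbol y}\in\Sigma_q^{m}} \mathsf{H}^{\mathsf{In}}_{1\text{-}\mathsf{Del}}({\boldsymbol y}) = \log_2(nq)-\frac{\log_2 n}{q},$$ and this minimum is attained only by channel outputs having a single run (constant sequences).
   Context: $\Sigma_q=\{0,1,\dots,q-1\}$. For sequences ${\boldsymbol x}$ of length $N$ and ${\boldsymbol y}$ of length $\ell\le N$, the embedding number $\omega_{{\boldsymbol y}}({\boldsymbol x})$ is the number of index tuples $1\le i_1<\dots<i_\ell\le N$ with $x_{i_j}=y_j$ for all $j$. The $k$-deletion channel with input length $n$ maps ${\boldsymbol x}\in\Sigma_q^n$ to ${\boldsymbol y}\in\Sigma_q^{n-k}$ with probability $\Pr\{{\boldsymbol y}\mid{\boldsymbol x}\}=\omega_{{\boldsymbol y}}({\boldsymbol x})/\binom{n}{k}$. Under uniform transmission, the input $X$ is uniform on $\Sigma_q^n$, and for an output ${\boldsymbol y}$ the input entropy is $\mathsf{H}^{\mathsf{In}}_{k\text{-}\mathsf{Del}}({\boldsymbol y})=H(X\mid Y={\boldsymbol y})=-\sum_{{\boldsymbol x}}P({\boldsymbol x}\mid{\boldsymbol y})\log_2 P({\boldsymbol x}\mid{\boldsymbol y})$ where $P({\boldsymbol x}\mid {\boldsymbol y})=\Pr\{{\boldsymbol y}\mid{\boldsymbol x}\}/\sum_{{\boldsymbol x}'\in\Sigma_q^n}\Pr\{{\boldsymbol y}\mid{\boldsymbol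 x}'\}$. A run of a sequence is a maximal block of identical consecutive symbols. *)

(* Defs.v *)
From HB Require Import structures.
From mathcomp Require Import all_boot all_order all_algebra.
From mathcomp Require Import reals exp.
Set Implicit Arguments. Unset Strict Implicit. Unset Printing Implicit Defensive.
Import Order.TTheory GRing.Theory Num.Theory.
Local Open Scope ring_scope.

(* Sequences over Sigma_q = {0,..,q-1} of length N are N.-tuple 'I_q. *)

Definition emb (q N l : nat) (x : N.-tuple 'I_q) (y : l.-tuple 'I_q) : nat :=
  #|[set f : {ffun 'I_l -> 'I_N} |
      [forall i : 'I_l, forall j : 'I_l, (i < j)%N ==> (f i < f j)%N] &&
      [forall j : 'I_l, tnth x (f j) == tnth y j]]|.

Definition log2 (R : realType) (x : R) : R := ln x / ln 2.

Definition delPr (R : realType) (q n k : nat)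
  (y : (n - k).-tuple 'I_q) (x : n.-tuple 'I_q) : R :=
  (emb x y)%:R / ('C(n, k))%:R.

(* Posterior P(x | y) under uniform input. *)
Definition post (R : realType) (q n k : nat)
  (y : (n - k).-tuple 'I_q) (x : n.-tuple 'I_q) : R :=
  delPr R y x / \sum_(x' : n.-tuple 'I_q) delPr R y x'.

Definition Hin (R : realType) (q n k : nat) (y : (n - k).-tuple 'I_q) : R :=
  - \sum_(x : n.-tuple 'I_q)
      (if post R y x == 0 then 0 else post R y x * log2 (post R y x)).

(* Main.v *)
Require Import Defs.
From HB Require Import structures.
From mathcomp Require Import all_boot all_order all_algebra.
From mathcomp Require Import reals exp.
From mathcomp Require Import zify ring lra.
Set Implicit Arguments. Unset Strict Implicit. Unset Printing Implicit Defensive.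

Definition dl (T : Type) (s : seq T) (i : nat) := take i s ++ drop i.+1 s.

Lemma size_dl (T : Type) (s : seq T) i : i < size s -> size (dl s i) = (size s).-1.
Proof. move=> h; rewrite /dl size_cat size_take size_drop h; lia. Qed.

Lemma nth_dl (T : Type) (x0 : T) (s : seq T) i j : i < size s ->
  nth x0 (dl s i) j = nth x0 s (bump i j).
Proof.
move=> h; rewrite /dl nth_cat size_take h /bump.
case: ltnP => hj.
  by rewrite nth_take // add0n.
rewrite nth_drop add1n; congr nth; lia.
Qed.

Lemma dl_ins (T : Type) (s : seq T) i a : i <= size s ->
  dl (take i s ++ a :: drop i s) i = s.
Proof.
move=> h; rewrite /dl take_cat size_take.
have -> : (if i < size s then i else size s) = i by case: ltnP => //; lia.
rewrite ltnn subnn take0 cats0 drop_cat size_take.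
have -> : (if i < size s then i else size s) = i by case: ltnP => //; lia.
rewrite ltnNge leqnSn /= subSnn /= drop0.
by rewrite cat_take_drop.
Qed.

Lemma ins_dl (T : Type) (x0 : T) (s : seq T) i : i < size s ->
  take i (dl s i) ++ nth x0 s i :: drop i (dl s i) = s.
Proof.
move=> h; rewrite /dl take_cat drop_cat size_take h ltnn subnn take0 drop0 cats0.
by rewrite -drop_nth // cat_take_drop.
Qed.

Lemma dl_eq_nth (T : Type) (x0 : T) (s : seq T) i j : j < i -> i < size s ->
  dl s j = dl s i -> nth x0 s i = nth x0 s i.-1.
Proof.
move=> hji his e.
have := congr1 (fun t => nth x0 t i.-1) e.
rewrite /= !nth_dl //; last by lia.
rewrite /bump.
have -> : (j <= i.-1) = true by lia.
have -> : (i <= i.-1) = false by lia.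
by rewrite add1n add0n prednK //; lia.
Qed.

Lemma inc_miss l i (F : nat -> nat) : i <= l ->
  (forall j k, j < k < l -> F j < F k) -> (forall k, k < l -> F k <= l) ->
  (forall k, k < l -> F k != i) -> forall j, j < l -> F j = bump i j.
Proof.
move=> hil hinc hb hn.
have mono : forall j k, j <= k < l -> F j + (k - j) <= F k.
  move=> j; elim=> [|k IH] hk; first by (have -> : j = 0 by lia); rewrite addn0.
  case: (ltnP j k.+1) => hjk; last by (have -> : j = k.+1 by lia); rewrite subnn addn0.
  have h1 := IH ltac:(lia).
  have h2 := hinc k k.+1 ltac:(lia).
  lia.
have lo : forall j, j < l -> j <= F j.
  by move=> j hj; have := mono 0 j ltac:(lia); lia.
have up : forall j, j < l -> F j <= j.+1.
  move=> j hj; have := mono j l.-1 ltac:(lia); have := hb l.-1 ltac:(lia); lia.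
move=> j hj; rewrite /bump.
case: (leqP i j) => hij.
  have : F j != j.
    apply/negP => /eqP e.
    have := mono i j ltac:(lia); have := lo i ltac:(lia); have := hn i ltac:(lia).
    move=> /eqP; lia.
  have := lo j hj; have := up j hj; move=> ? ? /eqP; lia.
have : F j != j.+1.
  apply/negP => /eqP e.
  have := mono j i.-1 ltac:(lia); have := up i.-1 ltac:(lia); have := hn i.-1 ltac:(lia).
  move=> /eqP; lia.
have := lo j hj; have := up j hj; move=> ? ? /eqP; lia.
Qed.

Lemma emb_del q l (x : l.+1.-tuple 'I_q) (y : l.-tuple 'I_q) :
  emb x y = #|[set i : 'I_l.+1 | dl (val x) i == val y]|.
Proof.
pose x0 := tnth x ord0.
pose phi := fun i : 'I_l.+1 => [ffun j : 'I_l => lift i j].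
have phi_inj : injective phi.
  move=> i i' /ffunP E; apply/eqP/negP => ne.
  case: (unliftP i i') => [j hj|hj]; last by rewrite hj eqxx in ne.
  have := E j; rewrite !ffunE -hj => e.
  by have := neq_lift i' j; rewrite -e eqxx.
have key : [set f : {ffun 'I_l -> 'I_l.+1} |
      [forall i : 'I_l, forall j : 'I_l, (i < j)%N ==> (f i < f j)%N] &&
      [forall j : 'I_l, tnth x (f j) == tnth y j]] = phi @: [set i : 'I_l.+1 | dl (val x) i == val y].
  apply/setP => f; rewrite inE; apply/andP/imsetP.
    move=> [/forallP hinc /forallP hc].
    have [i hi] : exists i : 'I_l.+1, i \notin codom f.
      apply/existsP; rewrite -negb_forall; apply/negP => /forallP hall.
      have : #|'I_l.+1| <= #|codom f|.
        by apply: subset_leq_card; apply/subsetP => z _; apply: hall.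
      have := card_size (codom f); rewrite size_codom !card_ord; lia.
    pose F k := oapp (fun o : 'I_l => val (f o)) 0 (insub k).
    have FE : forall o : 'I_l, F o = f o by move=> o; rewrite /F valK.
    have FB : forall j, j < l -> F j = bump i j.
      apply: inc_miss.
      - by have := ltn_ord i; lia.
      - move=> j k /andP [hjk hk].
        have hj : j < l by lia.
        have := FE (Ordinal hj); have := FE (Ordinal hk); move=> /= -> ->.
        by have := hinc (Ordinal hj); move=> /forallP /(_ (Ordinal hk)) /implyP; apply.
      - move=> k hk; have := FE (Ordinal hk) => /= ->.
        by case: (f (Ordinal hk)).
      - move=> k hk; have := FE (Ordinal hk) => /= ->.
        apply/negP => /eqP e; move: hi; rewrite -(val_inj e).
        by rewrite codom_f.
    have hfp : f = phi i.
      apply/ffunP => j; rewrite ffunE; apply/val_inj => /=; rewrite -FE; exact: FB.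
    exists i => //; rewrite inE; apply/eqP.
    have hix : i < size (val x) by rewrite size_tuple.
    refine (@eq_from_nth _ x0 _ _ _ _).
      by rewrite size_dl // !size_tuple.
    move=> j; rewrite size_dl // size_tuple => hj.
    rewrite nth_dl //.
    have := hc (Ordinal hj); rewrite !(tnth_nth x0) /= => /eqP <-.
    by rewrite -FE /= FB.
  move=> [i]; rewrite inE => /eqP hi ->; split.
    apply/forallP => a; apply/forallP => b; apply/implyP => hab.
    rewrite !ffunE /= /bump; lia.
  have hix : i < size (val x) by rewrite size_tuple.
  apply/forallP => j; rewrite ffunE !(tnth_nth x0) -hi nth_dl //.
rewrite /emb key card_imset //.
Qed.

Lemma card_sumb (T : finType) (P : pred T) : #|[set i | P i]| = \sum_i (P i : nat).
Proof.
rewrite -sum1_card big_mkcond /=; apply: eq_bigr => i _; rewrite inE; by case: (P i).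
Qed.

Lemma nth_ins (T : Type) (d : T) (s : seq T) i a : i <= size s ->
  nth d (take i s ++ a :: drop i s) i = a.
Proof.
move=> h; have e : size (take i s) = i by rewrite size_take; case: ltnP => h2; lia.
by rewrite nth_cat e ltnn subnn.
Qed.

Section Count.
Variables (q l : nat) (Y : seq 'I_q).
Hypothesis hY : size Y = l.

Definition ee (x : l.+1.-tuple 'I_q) := #|[set i : 'I_l.+1 | dl (val x) i == Y]|.

Definition ins (i : nat) (a : 'I_q) : l.+1.-tuple 'I_q :=
  insubd (nseq_tuple l.+1 a) (take i Y ++ a :: drop i Y).

Lemma insE i a : i <= l -> val (ins i a) = take i Y ++ a :: drop i Y.
Proof.
move=> h; rewrite /ins val_insubd size_cat /= size_take size_drop hY.
have -> : (if i < l then i else l) + (l - i).+1 == l.+1.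
  by apply/eqP; case: ltnP => h2; lia.
by [].
Qed.

Lemma card_fix_i (i : 'I_l.+1) : #|[set x : l.+1.-tuple 'I_q | dl (val x) i == Y]| = q.
Proof.
have hi : i <= l by have := ltn_ord i.
have -> : [set x : l.+1.-tuple 'I_q | dl (val x) i == Y] = [set ins i a | a : 'I_q].
  apply/setP => x; rewrite inE; apply/eqP/imsetP.
    move=> e; exists (nth (tnth x ord0) (val x) i) => //.
    apply/val_inj; rewrite insE // -e ins_dl // size_tuple //.
  by move=> [a _ ->]; rewrite insE // dl_ins // hY.
rewrite card_imset ?card_ord //.
move=> a b e; have := congr1 (fun t : l.+1.-tuple 'I_q => nth a (val t) i) e.
by rewrite !insE // !nth_ins // hY.
Qed.

Lemma sum_ee : \sum_(x : l.+1.-tuple 'I_q) ee x = l.+1 * q.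
Proof.
rewrite /ee.
under eq_bigr => x _ do rewrite card_sumb.
rewrite exchange_big /=.
under eq_bigr => i _ do rewrite -(card_sumb (fun x : l.+1.-tuple 'I_q => dl (val x) i == Y)) card_fix_i.
by rewrite sum_nat_const card_ord.
Qed.


Definition TT (x : l.+1.-tuple 'I_q) := [set i : 'I_l.+1 | (dl (val x) i == Y) &&
   [exists j : 'I_l.+1, (j < i) && (dl (val x) j == Y)]].

Lemma ee_pred_le x : (ee x).-1 <= #|TT x|.
Proof.
rewrite /ee.
set S := [set i : 'I_l.+1 | dl (val x) i == Y].
have sub : TT x \subset S by apply/subsetP => i; rewrite !inE => /andP [].
have h1 : #|S :\: TT x| <= 1.
  apply/card_le1_eqP => a b; rewrite !inE => /andP [na ea] /andP [nb eb].
  case: (ltngtP a b) => hab; last by apply/val_inj.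
  - by move: nb; rewrite eb /=; case/negP; apply/existsP; exists a; rewrite hab ea.
  - by move: na; rewrite ea /=; case/negP; apply/existsP; exists b; rewrite hab eb.
have := cardsID (TT x) S; rewrite (setIidPr sub); lia.
Qed.

Lemma T_char d x (i : 'I_l.+1) : i \in TT x ->
  val x = take i Y ++ nth d Y i.-1 :: drop i Y.
Proof.
rewrite inE => /andP [/eqP e /existsP [j /andP [hji /eqP ej]]].
have hix : i < size (val x) by rewrite size_tuple.
have h1 := dl_eq_nth d hji hix (etrans ej (esym e)).
have h2 : nth d (dl (val x) i) i.-1 = nth d (val x) i.-1.
  by rewrite nth_dl // /bump; congr nth; lia.
by rewrite -{1}(ins_dl d hix) e h1 -h2 e.
Qed.

Lemma card_T_i (i : 'I_l.+1) : #|[set x | i \in TT x]| <= (0 < i).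
Proof.
case: (posnP i) => hi.
  rewrite leqn0 cards_eq0; apply/eqP/setP => x; rewrite !inE.
  by apply/negP => /andP [_ /existsP [j /andP [hj _]]]; rewrite hi in hj.
apply/card_le1_eqP => x x'; rewrite !inE => hx hx'.
have {}hx : i \in TT x by rewrite inE.
have {}hx' : i \in TT x' by rewrite inE.
apply/val_inj; rewrite (T_char (tnth x ord0) hx) (T_char (tnth x ord0) hx') //.
Qed.

Lemma sum_tt : \sum_(x : l.+1.-tuple 'I_q) (ee x).-1 <= l.
Proof.
have h1 : \sum_(x : l.+1.-tuple 'I_q) (ee x).-1 <= \sum_(x : l.+1.-tuple 'I_q) #|TT x|.
  by apply: leq_sum => x _; exact: ee_pred_le.
apply: (leq_trans h1).
have e1 : forall x : l.+1.-tuple 'I_q, #|TT x| = \sum_(i : 'I_l.+1) (i \in TT x : nat).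
  by move=> x; rewrite -card_sumb; apply: eq_card => i; rewrite inE.
under eq_bigr => x _ do rewrite e1.
rewrite exchange_big /=.
have h2 : \sum_(i : 'I_l.+1) \sum_(x : l.+1.-tuple 'I_q) (i \in TT x : nat) <= \sum_(i : 'I_l.+1) (0 < i : nat).
  apply: leq_sum => i _; rewrite -card_sumb; exact: card_T_i.
apply: (leq_trans h2).
rewrite big_ord_recl /= add0n.
rewrite (eq_bigr (fun _ => 1)) ?sum_nat_const ?card_ord ?muln1 //.
Qed.


Lemma ee_full_const x : ee x = l.+1 -> constant Y.
Proof.
move=> hx; pose d := tnth x ord0.
have hall : forall i : 'I_l.+1, dl (val x) i = Y.
  have : [set i : 'I_l.+1 | dl (val x) i == Y] == [set: 'I_l.+1].
    have hx' : #|[set i : 'I_l.+1 | dl (val x) i == Y]| = l.+1 := hx.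
    by rewrite eqEcard subsetT cardsT card_ord hx' ltnSn.
  move=> /eqP hS i; have : i \in [set: 'I_l.+1] by rewrite inE.
  by rewrite -hS inE => /eqP.
have hsz : size (val x) = l.+1 by rewrite size_tuple.
have hk : forall k, k <= l -> nth d (val x) k = nth d (val x) 0.
  elim=> [//|k IH] hk.
  have hk1 : k.+1 < l.+1 by [].
  have hk2 : k.+1 < size (val x) by rewrite hsz.
  have := dl_eq_nth d (ltn0Sn k) hk2.
  rewrite (hall ord0) (hall (Ordinal hk1)) => /(_ erefl) /= ->; apply: IH; lia.
apply/(constantP d); exists (nth d (val x) 0).
refine (@eq_from_nth _ d _ _ _ _); first by rewrite size_nseq.
move=> k hk'; rewrite nth_nseq hk' -(hall ord0) nth_dl ?hsz //= /bump /= add1n.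
by apply: hk; rewrite hY in hk'; lia.
Qed.

Lemma const_ee_full : 0 < l -> constant Y -> exists x, ee x = l.+1.
Proof.
move=> hl hc.
have hq : 0 < q.
  move: hl; rewrite -hY; case: (Y) => [|a0 ?] //= _.
  exact: (leq_ltn_trans (leq0n _) (ltn_ord a0)).
pose a := Ordinal hq.
have [b hb] := constantP a _ hc.
exists (nseq_tuple l.+1 b).
have hall : forall i : 'I_l.+1, dl (val (nseq_tuple l.+1 b)) i = Y.
  move=> i; have hi : i < size (val (nseq_tuple l.+1 b)) by rewrite size_tuple.
  refine (@eq_from_nth _ b _ _ _ _); first by rewrite size_dl // size_tuple hY.
  move=> k; rewrite size_dl // size_tuple /= => hk.
  rewrite nth_dl // hb; change (b :: nseq l b) with (nseq l.+1 b).
  by rewrite !nth_nseq !if_same.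
rewrite /ee (_ : [set i : 'I_l.+1 | _] = setT) ?cardsT ?card_ord //.
by apply/setP => i; rewrite !inE hall eqxx.
Qed.

End Count.

Definition G (t : nat) := t.+1 ^ t.+1.

Lemma lexp_mono m n e : m <= n -> m ^ e <= n ^ e.
Proof. by move=> h; case: e => [//|e]; rewrite leq_exp2r. Qed.

Lemma bern c k b : c ^ k * (c + k * b) <= (c + b) ^ k * c.
Proof.
elim: k => [|k IH]; first by rewrite !expn0 mul0n addn0 mul1n.
rewrite !expnS.
have h1 : c * (c + k.+1 * b) <= (c + b) * (c + k * b) by nia.
have h2 : c ^ k * (c * (c + k.+1 * b)) <= c ^ k * ((c + b) * (c + k * b)).
  by rewrite leq_mul2l h1 orbT.
have h3 : (c + b) * (c ^ k * (c + k * b)) <= (c + b) * ((c + b) ^ k * c).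
  by rewrite leq_mul2l IH orbT.
move: h2 h3; move: (c ^ k) ((c + b) ^ k) => P Q h2 h3.
nia.
Qed.

Lemma G_aux a b : a.+1 ^ a.+1 * b.+1 <= (a + b).+1 ^ a.+1.
Proof.
have := bern a.+1 a.+1 b.
have -> : a.+1 + a.+1 * b = a.+1 * b.+1 by rewrite mulnS.
rewrite -addSn; move: (a.+1 ^ a.+1) ((a.+1 + b) ^ a.+1) => X Y h.
have : a.+1 * (X * b.+1) <= a.+1 * Y by move: h; rewrite mulnA (mulnC X) -mulnA (mulnC Y).
by rewrite leq_pmul2l.
Qed.

Lemma G_split a b : G (a + b) = (a + b).+1 ^ a.+1 * (a + b).+1 ^ b.
Proof. by rewrite /G -expnD addSn. Qed.

Lemma G_super a b : G a * G b <= G (a + b).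
Proof.
have h1 := G_aux a b.
have h2 : b.+1 ^ b <= (a + b).+1 ^ b by apply: lexp_mono; lia.
have := leq_mul h1 h2.
rewrite G_split /G (expnSr b.+1 b).
move: (a.+1 ^ a.+1) (b.+1 ^ b) ((a + b).+1 ^ a.+1) ((a + b).+1 ^ b) => X Y Z W.
nia.
Qed.

Lemma G_super_strict a b : 0 < a -> 0 < b -> G a * G b < G (a + b).
Proof.
move=> ha hb.
have h1 := G_aux a b.
have h2 : b.+1 ^ b < (a + b).+1 ^ b by rewrite ltn_exp2r //; lia.
have h0 : 0 < a.+1 ^ a.+1 * b.+1 by rewrite muln_gt0 expn_gt0.
have h3 : a.+1 ^ a.+1 * b.+1 * b.+1 ^ b < a.+1 ^ a.+1 * b.+1 * (a + b).+1 ^ b by rewrite ltn_pmul2l.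
have h4 := leq_mul h1 (leqnn ((a + b).+1 ^ b)).
move: h3 h4.
rewrite G_split /G (expnSr b.+1 b).
move: (a.+1 ^ a.+1) (b.+1 ^ b) ((a + b).+1 ^ a.+1) ((a + b).+1 ^ b) => X Y Z W.
nia.
Qed.

Lemma G_mono a b : a <= b -> G a <= G b.
Proof.
move=> h; rewrite /G; apply: (leq_trans (lexp_mono a.+1 (h : a.+1 <= b.+1))).
by apply: leq_pexp2l.
Qed.

Lemma G_smono a b : a < b -> G a < G b.
Proof.
move=> h; rewrite /G.
apply: (@leq_ltn_trans (a.+1 ^ b.+1)); first by apply: leq_pexp2l => //; lia.
by rewrite ltn_exp2r.
Qed.

Lemma G_gt0 a : 0 < G a.
Proof. by rewrite /G expn_gt0. Qed.

Lemma prod_G (I : finType) (P : pred I) (t : I -> nat) :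
  \prod_(i | P i) G (t i) <= G (\sum_(i | P i) t i).
Proof.
apply: (big_rec2 (fun a b => a <= G b)) => // i a b _ h.
apply: leq_trans (G_super _ _).
by rewrite leq_mul2l h orbT.
Qed.

Lemma eG k : k ^ k = G k.-1.
Proof. by case: k. Qed.

Section ProdBound.
Variables (I : finType) (t : I -> nat) (M : nat).
Hypothesis hM : 0 < M.
Hypothesis hs : \sum_i t i <= M.

Lemma P_le : \prod_i G (t i) <= G M.
Proof. exact: leq_trans (prod_G _ t) (G_mono hs). Qed.

Lemma P_eq_ex : \prod_i G (t i) = G M -> exists i, t i = M.
Proof.
move=> hP.
case: (pickP (fun i => t i == M)) => [i /eqP hi|hn]; first by exists i.
exfalso; move: hP; apply/eqP; rewrite neq_ltn; apply/orP; left.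
case: (pickP (fun i => 0 < t i)) => [i0 hi0|hz].
  have hs' := hs.
  rewrite (bigD1 i0) //= (bigD1 i0 (P := predT)) //= in hs' *.
  set S := \sum_(i | i != i0) t i in hs'.
  have hp : \prod_(i | i != i0) G (t i) <= G S := prod_G _ t.
  have hne : t i0 != M by rewrite hn.
  case: (posnP S) => hS.
    apply: (leq_ltn_trans (leq_mul (leqnn _) hp)).
    rewrite hS /G muln1; apply: G_smono; rewrite hS in hs'; lia.
  apply: (leq_ltn_trans (leq_mul (leqnn _) hp)).
  apply: (leq_trans (G_super_strict hi0 hS)).
  exact: G_mono.
rewrite (eq_bigr (fun _ => G 0)); last by move=> i _; have := hz i; case: (t i).
rewrite prod_nat_const /G !exp1n.
have := G_smono hM; rewrite /G exp1n //.
Qed.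

Lemma ex_P_eq : (exists i, t i = M) -> \prod_i G (t i) = G M.
Proof.
move=> [i0 hi0]; apply/eqP; rewrite eqn_leq P_le /=.
rewrite (bigD1 i0) //= hi0 -{1}(muln1 (G M)) leq_mul2l; apply/orP; right.
by rewrite prodn_gt0 // => i; exact: G_gt0.
Qed.

End ProdBound.

Import Order.TTheory GRing.Theory Num.Theory.
Local Open Scope ring_scope.

Lemma sum_ln_prod (R : realType) (I : finType) (e : I -> nat) :
  (forall i, (0 < e i)%N) ->
  \sum_i ln ((e i)%:R : R) = ln ((\prod_i e i)%:R).
Proof.
move=> he.
suff: \sum_i ln ((e i)%:R : R) = ln ((\prod_i e i)%:R) /\ (0 < \prod_i e i)%N by case.
apply: (big_rec2 (fun a (b : nat) => a = ln (b%:R : R) /\ (0 < b)%N)).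
  by rewrite ln1.
move=> i a b _ [-> hb]; split; last by rewrite muln_gt0 he.
by rewrite natrM lnM // posrE ltr0n.
Qed.

Lemma entropy_formula (R : realType) (I : finType) (e : I -> nat) (N : nat) :
  (0 < N)%N -> (\sum_i e i)%N = N ->
  - \sum_i (if (e i)%:R / N%:R == 0 :> R then 0
            else (e i)%:R / N%:R * log2 ((e i)%:R / N%:R))
  = log2 (N%:R : R) - ln ((\prod_i (e i) ^ (e i))%:R : R) / (N%:R * ln 2).
Proof.
move=> hN hs.
have l2 : 0 < ln (2 : R) by apply: ln_gt0; rewrite ltr1n.
have hNR : 0 < (N%:R : R) by rewrite ltr0n.
rewrite (eq_bigr (fun i => (ln (((e i) ^ (e i))%:R : R) - (e i)%:R * ln (N%:R : R)) / (N%:R * ln 2))).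
  rewrite -mulr_suml big_split /= sumrN sum_ln_prod; last by move=> i; rewrite expn_gt0; case: (e i).
  rewrite -mulr_suml -natr_sum hs /log2.
  field; apply/andP; split; rewrite ?lt0r_neq0 //.
move=> i _.
case: (posnP (e i)) => hei.
  by rewrite hei mul0r eqxx expn0 ln1 mul0r subrr mul0r.
have heR : 0 < ((e i)%:R : R) by rewrite ltr0n.
rewrite mulf_eq0 invr_eq0 (negbTE (lt0r_neq0 heR)) (negbTE (lt0r_neq0 hNR)) /=.
rewrite natrX lnXn // /log2 ln_div ?posrE // -mulr_natl.
field; apply/andP; split; rewrite ?lt0r_neq0 //.
Qed.

Lemma emb_del' q l L (x : l.+1.-tuple 'I_q) (y : L.-tuple 'I_q) : L = l ->
  emb x y = ee (val y) x.
Proof. by move=> e; subst L; rewrite emb_del. Qed.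

Unset Implicit Arguments.
Theorem theorem6 (R : realType) (q n : nat) (hq : (2 <= q)%N) (hn : (2 <= n)%N) :
  (forall y : (n - 1).-tuple 'I_q,
      log2 ((n * q)%:R : R) - log2 (n%:R : R) / q%:R <= Hin R y) /\
  (forall y : (n - 1).-tuple 'I_q,
      Hin R y = log2 ((n * q)%:R : R) - log2 (n%:R : R) / q%:R <->
      constant (val y)).
Proof.
case: n hn => [//|l] hn.
have hl : (0 < l)%N by [].
have hq0 : (0 < q)%N by lia.
have l2 : 0 < ln (2 : R) by apply: ln_gt0; rewrite ltr1n.
have h1 : (1 + l%:R : R) != 0 by rewrite addrC natr1 pnatr_eq0.
have hNR : 0 < ((l.+1 * q)%:R : R) by rewrite ltr0n muln_gt0.
have hT : log2 ((l.+1 * q)%:R : R) - log2 (l.+1%:R : R) / q%:R =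
    log2 ((l.+1 * q)%:R : R) - ln ((l.+1 ^ l.+1)%N%:R : R) / ((l.+1 * q)%:R * ln 2).
  rewrite natrX lnXn ?ltr0n // /log2 natrM -mulr_natl.
  field; by rewrite (lt0r_neq0 l2) pnatr_eq0 -lt0n hq0 h1.
suff key : forall y : (l.+1 - 1).-tuple 'I_q,
   Hin R y = log2 ((l.+1 * q)%:R : R) -
     ln ((\prod_(x : l.+1.-tuple 'I_q) (emb x y) ^ (emb x y))%N%:R : R) / ((l.+1 * q)%:R * ln 2) /\
   (\prod_(x : l.+1.-tuple 'I_q) (emb x y) ^ (emb x y) <= l.+1 ^ l.+1)%N /\
   ((\prod_(x : l.+1.-tuple 'I_q) (emb x y) ^ (emb x y))%N = (l.+1 ^ l.+1)%N <-> constant (val y)).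
  have hd : 0 < (l.+1 * q)%:R * ln (2 : R) by rewrite mulr_gt0.
  have pos : forall (P : nat), (0 < P)%N -> (P%:R : R) \is Num.pos.
    by move=> P hP; rewrite posrE ltr0n.
  have Ppos : forall y : (l.+1 - 1).-tuple 'I_q, (0 < \prod_(x : l.+1.-tuple 'I_q) (emb x y) ^ (emb x y))%N.
    by move=> y; apply: prodn_gt0 => x; rewrite expn_gt0; case: (emb x y).
  have nnpos : (0 < l.+1 ^ l.+1)%N by rewrite expn_gt0.
  split=> y; have [hH [hle heq]] := key y; rewrite hH hT.
    rewrite lerD2l lerN2 ler_pdivrMr // divfK ?lt0r_neq0 //.
    by rewrite ler_ln ?pos // ler_nat.
  rewrite -heq; split.
    move=> /subrI /(congr1 (fun z => z * ((l.+1 * q)%:R * ln 2))).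
    rewrite !divfK ?lt0r_neq0 // => /ln_inj.
    by move=> /(_ (pos _ (Ppos y)) (pos _ nnpos)) /eqP; rewrite eqr_nat => /eqP.
  by move=> ->.
move=> y.
set Y := val y.
have hY : size Y = l by rewrite size_tuple subn1.
have hE : forall x : l.+1.-tuple 'I_q, emb x y = ee Y x by move=> x; apply: emb_del'; rewrite subn1.
have hsum : (\sum_(x : l.+1.-tuple 'I_q) emb x y)%N = (l.+1 * q)%N.
  by rewrite (eq_bigr _ (fun x _ => hE x)) sum_ee.
have hpost : forall x : l.+1.-tuple 'I_q, post R y x = (emb x y)%:R / (l.+1 * q)%:R.
  move=> z; rewrite /post /delPr bin1.
  rewrite -mulr_suml -natr_sum hsum natrM.
  by field; rewrite pnatr_eq0 -lt0n hq0 h1.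
have hprod : (\prod_(x : l.+1.-tuple 'I_q) (emb x y) ^ (emb x y))%N = (\prod_(x : l.+1.-tuple 'I_q) G (ee Y x).-1)%N.
  by apply: eq_bigr => x _; rewrite hE eG.
have hst := sum_tt hY.
split.
  rewrite /Hin; under eq_bigr => x _ do rewrite hpost.
  by apply: entropy_formula; rewrite ?muln_gt0.
split; first by rewrite hprod; have := P_le hst.
rewrite hprod; split.
  move=> /(P_eq_ex hl hst) [x hx]; apply: (ee_full_const hY (x := x)).
  by move: hx; case: (ee Y x) => [|k] /= hx; [move: hl; rewrite -hx | rewrite hx].
move=> /(const_ee_full hY hl) [x hx]; apply: (ex_P_eq hst).
by exists x; rewrite hx.
Qed.
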